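(* Let $w,w'\in W^{\mathfrak p}$. Every circle of the circle diagram $\overline{C(w')}C(w)$ that has a self-intersection (i.e. contains both arcs of some linked pair of cups or of caps) is colored red.
   Context: Let $n\ge4$, $W$ the Weyl group of type $D_n$ with simple reflections $s_0,\dots,s_{n-1}$ ($s_0,s_1$ both joined to $s_2$, $s_i$ joined to $s_{i+1}$ for $i\ge2$), $W_{\mathfrak p}=\langle s_1,\dots,s_{n-1}\rangle$, $W^{\mathfrak p}$ the minimal length representatives of $W_{\mathfrak p}\backslash W$. For $w\in W^{\mathfrak p}$ let $(\alpha_1,\dots,\alpha_n)=(+,\dots,+)\cdot w$ for the right action on $\{+,-\}^n$ where $s_i$ ($i\ge1$) swaps entries $i,i+1$ and $s_0$ sends $(a_1,a_2,\dots)$ to $(-a_2,-a_1,\dots)$; set $\alpha_{-i}=-\alpha_i$. Label $P=\{-2n,\dots,-1,1,\dots,2n\}$ by $+$ at $j<-n$, $-$ at $j>n$, $\alpha_j$ at $1\le|j|\le n$. The cup diagram $C(w)$ is obtained from the unique non-crossing matching of $P$ by arcs in the lower half plane joining each $+$ to a $-$ on its right, by replacing, for the arcs $(-y_1,y_1),\dots,(-y_{2k},y_{2k})$ crossing $0$ ($y_1<\dots<y_{2k}$), each pair $(-y_{2j-1},y_{2j-1}),(-y_{2j},y_{2j})$ by the two arcs joining $-y_{2j}$ to $y_{2j-1}$ and $-y_{2j-1}$ to $y_{2j}$ (a linked pair of cups, crossing on $x=0$). The cap diagram $\overline{C(w')}$ is the reflection of $C(w')$ in the horizontal axis, with linked pairs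 of caps the reflected linked pairs. The circle diagram $\overline{C(w')}C(w)$ is the union of cups and caps; it is a union of closed curves (circles). A circle meets a linked pair if it contains at least one of its arcs. Points $>n$ are upper outer points and points $<-n$ are lower outer points. Coloring of a circle: black if it passes through no outer point and the number of distinct linked pairs it meets is even; red if it passes through more than one upper outer point, or more than one lower outer point, or the number of distinct linked pairs it meets is odd; green otherwise. *)

(* Defs.v *)
From mathcomp Require Import all_boot all_order.
From mathcomp Require Import ssralg ssrnum ssrint.
Import Order.TTheory GRing.Theory Num.Theory.
Set Implicit Arguments. Unset Strict Implicit. Unset Printing Implicit Defensive.

(* The Weyl group W of type D_n, generators s_0,...,s_{n-1}.           *)
(* Elements are represented by words (seq 'I_n, index i = s_i).        *)
(* Everything is a RIGHT action: x . (s_i1 ... s_ik) = (..(x.s_i1)..).s_ik *)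

(* generic right action of s_i on vectors indexed 1..n:
   s_i (i>=1) swaps entries i,i+1; s_0 sends (a1,a2,..) to (-a2,-a1,..). *)
Definition gen_act (T : Type) (neg : T -> T) (i : nat) (a : nat -> T) : nat -> T :=
  fun j =>
    if i == 0 then
      (if j == 1 then neg (a 2) else if j == 2 then neg (a 1) else a j)
    else
      (if j == i then a i.+1 else if j == i.+1 then a i else a j).

Definition word_act (T : Type) (neg : T -> T) (n : nat) (w : seq 'I_n)
  (a : nat -> T) : nat -> T :=
  foldl (fun b (i : 'I_n) => gen_act neg i b) a w.

(* W is realised faithfully through its reflection representation on Z^n:
   two words represent the same element of W iff they act identically. *)
Definition weq (n : nat) (w v : seq 'I_n) : Prop :=
  forall (x : nat -> int) (j : nat),
    word_act (fun z : int => (- z)%R) w x j = word_act (fun z : int => (- z)%R) v x j.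

(* w is a word of minimal length in its right coset W_p w, where
   W_p = <s_1,...,s_{n-1}>; i.e. w is a reduced word of an element of W^p. *)
Definition min_coset_rep (n : nat) (w : seq 'I_n) : Prop :=
  forall u v : seq 'I_n, all (fun i : 'I_n => 0 < i) u ->
    weq v (u ++ w) -> size w <= size v.

(* (alpha_1,...,alpha_n) = (+,...,+) . w ; true = '+', false = '-' *)
Definition alpha_of (n : nat) (w : seq 'I_n) : nat -> bool :=
  word_act negb w (fun _ => true).

(* Points P = {-2n,...,-1,1,...,2n}, indexed by positions k : 'I_(4n)  *)
(* in increasing order.                                                *)
Definition pt (n k : nat) : int :=
  if k < 2 * n then (k%:Z - (2 * n)%:Z)%R else (k%:Z - (2 * n)%:Z + 1)%R.

Definition lab (n : nat) (alpha : nat -> bool) (k : nat) : bool :=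
  let p := pt n k in
  if (p < - (n%:Z))%R then true
  else if (n%:Z < p)%R then false
  else if (0 < p)%R then alpha (absz p)
  else ~~ alpha (absz p).

(* m is the (unique) non-crossing matching of P joining each + to a -
   on its right (m x = partner of x). *)
Definition is_cup_matching (n : nat) (alpha : nat -> bool)
  (m : 'I_(4 * n) -> 'I_(4 * n)) : Prop :=
  [/\ forall x : 'I_(4 * n), m (m x) = x,
      forall x : 'I_(4 * n), lab n alpha x != lab n alpha (m x),
      forall x : 'I_(4 * n), lab n alpha x -> x < m x
    & forall x y : 'I_(4 * n), x < m x -> y < m y -> ~~ [&& x < y, y < m x & m x < m y]].

(* right endpoints y_1 < ... < y_2k (positions) of the arcs crossing 0 *)
Definition crossR (n : nat) (m : 'I_(4 * n) -> 'I_(4 * n)) : seq 'I_(4 * n) :=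
  [seq b : 'I_(4 * n) <- enum 'I_(4 * n) | (2 * n <= b) && (m b < 2 * n)].

(* partner of a crossing right endpoint in its linked pair *)
Definition lpartner (n : nat) (m : 'I_(4 * n) -> 'I_(4 * n)) (x : 'I_(4 * n)) :
  'I_(4 * n) :=
  let ys := crossR m in
  if x \in ys then
    let i := index x ys in
    let i' := if odd i then i.-1 else i.+1 in
    if i' < size ys then nth x ys i' else x
  else x.

(* the cup diagram C: each pair (-y_{2j-1},y_{2j-1}),(-y_{2j},y_{2j}) is
   replaced by the arcs joining -y_{2j} to y_{2j-1} and -y_{2j-1} to y_{2j} *)
Definition cupC (n : nat) (m : 'I_(4 * n) -> 'I_(4 * n)) (x : 'I_(4 * n)) :
  'I_(4 * n) :=
  if x \in crossR m then m (lpartner m x)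
  else if m x \in crossR m then lpartner m (m x)
  else m x.

(* number of linked pairs; pair j (0-based) consists of the two arcs through
   the right endpoints ys[2j] and ys[2j+1] *)
Definition nlinked (n : nat) (m : 'I_(4 * n) -> 'I_(4 * n)) : nat :=
  (size (crossR m))./2.

Definition lp1 n (m : 'I_(4 * n) -> 'I_(4 * n)) (j : nat) : nat :=
  nth 0 (map val (crossR m)) j.*2.
Definition lp2 n (m : 'I_(4 * n) -> 'I_(4 * n)) (j : nat) : nat :=
  nth 0 (map val (crossR m)) j.*2.+1.

(* circle diagram: cups of cupC m, caps of cupC m' *)
Definition cedge (n : nat) (m m' : 'I_(4 * n) -> 'I_(4 * n)) : rel 'I_(4 * n) :=
  fun x y => (cupC m x == y) || (cupC m' x == y).

Definition circle (n : nat) (m m' : 'I_(4 * n) -> 'I_(4 * n)) (x : 'I_(4 * n)) :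
  {set 'I_(4 * n)} := [set y | connect (cedge m m') x y].

Definition meets n (m : 'I_(4 * n) -> 'I_(4 * n)) (C : {set 'I_(4 * n)}) (j : nat) :
  bool := [exists y in C, (val y == lp1 m j) || (val y == lp2 m j)].

Definition contains_both n (m : 'I_(4 * n) -> 'I_(4 * n)) (C : {set 'I_(4 * n)})
  (j : nat) : bool :=
  [exists y in C, val y == lp1 m j] && [exists y in C, val y == lp2 m j].

Definition self_intersects (n : nat) (m m' : 'I_(4 * n) -> 'I_(4 * n))
  (x : 'I_(4 * n)) : Prop :=
  let C := circle m m' x in
  (exists2 j, j < nlinked m & contains_both m C j) \/
  (exists2 j, j < nlinked m' & contains_both m' C j).

Definition nmet n (m m' : 'I_(4 * n) -> 'I_(4 * n)) (C : {set 'I_(4 * n)}) : nat :=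
  count (meets m C) (iota 0 (nlinked m)) + count (meets m' C) (iota 0 (nlinked m')).

Inductive color := Black | Red | Green.

(* upper outer points: pt > n  (positions >= 3n);
   lower outer points: pt < -n (positions < n) *)
Definition circle_color (n : nat) (m m' : 'I_(4 * n) -> 'I_(4 * n))
  (x : 'I_(4 * n)) : color :=
  let C := circle m m' x in
  let up := #|[set y in C | 3 * n <= val y]| in
  let low := #|[set y in C | val y < n]| in
  let k := nmet m m' C in
  if (up == 0) && (low == 0) && ~~ odd k then Black
  else if [|| 1 < up, 1 < low | odd k] then Red
  else Green.

(* Main.v *)
Require Import Defs.
From mathcomp Require Import all_boot all_order.
From mathcomp Require Import ssralg ssrnum ssrint.
From mathcomp Require Import zify.
Set Implicit Arguments. Unset Strict Implicit. Unset Printing Implicit Defensive.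

Lemma ptrev n k : k < 4 * n -> pt n (4 * n - k.+1) = (- pt n k)%R.
Proof. rewrite /pt => hk; case: ifP => h1; case: ifP => h2; lia. Qed.

Lemma pt_nz n k : pt n k != 0%R.
Proof. rewrite /pt; case: ifP => h1; lia. Qed.

Lemma lab_rev n alpha (k : 'I_(4 * n)) : lab n alpha (rev_ord k) = ~~ lab n alpha k.
Proof.
rewrite /lab /= ptrev //.
have := pt_nz n k; move: (pt n k) => p hp.
rewrite abszN.
case: ifP => h1; case: ifP => h2; try lia; case: ifP => h3; try lia;
  case: ifP => h4; try lia; case: ifP => h5; try lia; try case: ifP => h6; try lia;
  by rewrite ?negbK.
Qed.

Section Match.
Variables (N : nat) (L : 'I_N -> bool).
Definition ism (m : 'I_N -> 'I_N) : Prop :=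
  [/\ forall x : 'I_N, m (m x) = x,
      forall x : 'I_N, L x != L (m x),
      forall x : 'I_N, L x -> x < m x
    & forall x y : 'I_N, x < m x -> y < m y -> ~~ [&& x < y, y < m x & m x < m y]].

Lemma nc' m : ism m -> forall a b : 'I_N, a < m a -> b < m b -> a < b -> b < m a -> m a < m b -> False.
Proof. by case=> _ _ _ nc a b h1 h2 h3 h4 h5; move: (nc a b h1 h2); rewrite h3 h4 h5. Qed.

Lemma inside m : ism m -> forall x z : 'I_N, x < m x -> x < z -> z < m x -> x < m z /\ m z < m x.
Proof.
move=> hm x z h1 h2 h3; have [inv _ _ _] := hm.
have n1 : (m z : nat) != x.
  apply/negP => /eqP /val_inj E; move: h3; rewrite -E inv; lia.
have n2 : (m z : nat) != m x.
  apply/negP => /eqP /val_inj E; move: (congr1 m E); rewrite !inv => E2; move: h2; rewrite E2; lia.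
case: (ltngtP (m z) x) => h4; last by move: n1; rewrite h4 eqxx.
- exfalso; apply: (nc' hm (a:=m z) (b:=x)); rewrite ?inv //; lia.
case: (ltngtP (m z) (m x)) => h5; last by move: n2; rewrite h5 eqxx.
- by [].
- exfalso; apply: (nc' hm (a:=x) (b:=z)) => //; lia.
Qed.

Lemma lt_notL m : ism m -> forall x, ~~ L x -> m x < x.
Proof.
move=> hm x Lx; have [inv dif lt _] := hm.
have : L (m x) by move: (dif x); case: (L x) Lx; case: (L (m x)).
by move/lt; rewrite inv.
Qed.

Lemma uniq_m m1 m2 : ism m1 -> ism m2 -> forall x, m1 x = m2 x.
Proof.
move=> h1 h2.
have [inv1 dif1 lt1 _] := h1; have [inv2 dif2 lt2 _] := h2.
have key : forall d (x : 'I_N), L x -> m1 x - x < d -> m1 x = m2 x.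
  elim=> [|d IH] x Lx hd; first lia.
  have xa := lt1 x Lx.
  have inner : forall z : 'I_N, x < z -> z < m1 x -> m2 z = m1 z.
    move=> z hz1 hz2; have [hm1 hm2] := inside h1 xa hz1 hz2.
    case Lz: (L z).
    - by symmetry; apply: IH => //; have := lt1 z Lz; lia.
    - have Lmz : L (m1 z) by move: (dif1 z); rewrite Lz; case: (L (m1 z)).
      have E : m1 (m1 z) = m2 (m1 z) by apply: IH => //; rewrite inv1; lia.
      by rewrite inv1 in E; rewrite {1}E inv2.
  have xb := lt2 x Lx.
  case: (ltngtP (m1 x) (m2 x)) => hab; last exact: val_inj.
  - have [hz1 hz2] := inside h2 xb xa hab.
    have La : ~~ L (m1 x) by move: (dif1 x); rewrite Lx; case: (L (m1 x)).
    have hz3 := lt_notL h2 La.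
    have E := inner _ hz1 hz3; rewrite inv2 in E.
    have [_ hh] := inside h1 xa hz1 hz3.
    by move: hh; rewrite -E; lia.
  - have E := inner _ xb hab; rewrite inv2 in E.
    have [hh _] := inside h1 xa xb hab.
    by move: hh; rewrite -E; lia.
move=> x; case Lx: (L x).
- by apply: (key (m1 x - x).+1).
- have Lmx : L (m1 x) by move: (dif1 x); rewrite Lx; case: (L (m1 x)).
  have E := key (m1 (m1 x) - m1 x).+1 _ Lmx (ltnSn _).
  by rewrite inv1 in E; rewrite {2}E inv2.
Qed.
End Match.

Section Gen.
Variables (T : finType) (c c' sg : T -> T) (s : T -> bool).
Hypotheses (cK : involutive c) (c'K : involutive c') (sgK : involutive sg)
  (cN : forall v, c v != v) (c'N : forall v, c' v != v)
  (csg : forall v, c (sg v) = sg (c v)) (c'sg : forall v, c' (sg v) = sg (c' v))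
  (ss : forall v, s (sg v) = ~~ s v)
  (sgcN : forall v, sg (c v) != v) (sgc'N : forall v, sg (c' v) != v).

Definition ge := fun a b => (c a == b) || (c' a == b).
Definition gr := fun y => c' (c y).

Lemma gr_inj : injective gr.
Proof. by move=> a b /(congr1 (fun z => c (c' z))); rewrite /gr !c'K !cK. Qed.

Lemma iter_inj k : injective (iter k gr).
Proof. elim: k => [|k IH] a b //=; by move/gr_inj/IH. Qed.

Lemma refl_lemma (phi : T -> T) (hphi : forall y, gr (phi (gr y)) = phi y) x :
  fconnect gr x (phi x) -> exists z, (phi z = z) \/ (phi z = gr z).
Proof.
move=> H.
have Hk : forall k y, iter k gr (phi (iter k gr y)) = phi y.
  elim=> [|k IH] y //. by rewrite [iter k.+1 gr y]iterS iterSr hphi IH.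
have [t Ht] : exists t, iter t gr x = phi x by exists (findex gr x (phi x)); exact: iter_findex.
have et : t = (t./2 + odd t) + t./2.
  have := odd_double_half t; rewrite -addnn; lia.
exists (iter t./2 gr x).
have : iter t./2 gr (phi (iter t./2 gr x)) = iter t./2 gr (iter (odd t) gr (iter t./2 gr x)).
  rewrite Hk -Ht -!iterD; congr iter; lia.
move/iter_inj => ->.
by case: (odd t); [right|left]; rewrite ?iter1.
Qed.

Lemma gr_sg y : gr (sg y) = sg (gr y).
Proof. by rewrite /gr csg c'sg. Qed.

Lemma iter_sg k y : iter k gr (sg y) = sg (iter k gr y).
Proof. elim: k => //= k ->; exact: gr_sg. Qed.

Lemma Odisj x y : fconnect gr x y -> ~~ fconnect gr x (c y).
Proof.
move=> Hxy; apply/negP => Hxc.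
have Hy : fconnect gr y (c y).
  by apply: connect_trans Hxc; rewrite fconnect_sym //; exact: gr_inj.
have hc : forall w, gr (c (gr w)) = c w by move=> w; rewrite /gr !cK c'K.
have [z [Hz|Hz]] := @refl_lemma c hc y Hy.
- by move: (cN z); rewrite Hz eqxx.
- by move: (c'N (c z)); rewrite /gr in Hz; rewrite -Hz eqxx.
Qed.

Lemma connE x v : connect ge x v = fconnect gr x v || fconnect gr x (c v).
Proof.
apply/idP/idP.
- move=> H.
  have Cl : closed ge [pred y | fconnect gr x y || fconnect gr x (c y)].
    move=> a b /orP[] /eqP <-; rewrite !inE.
    + by rewrite cK orbC.
    + have e2 : fconnect gr x (c (c' a)) = fconnect gr x a.
        by rewrite (same_fconnect1_r gr_inj) /gr cK c'K.
      have e1 : fconnect gr x (c' a) = fconnect gr x (c a).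
        by rewrite [in RHS](same_fconnect1_r gr_inj) /gr cK.
      by rewrite e1 e2 orbC.
  by have := closed_connect Cl H; rewrite !inE connect0 => <-.
- have sub : subrel (frel gr) (connect ge).
    move=> a b /eqP <-; apply: (@connect_trans _ _ (c a)); apply: connect1.
      by rewrite /ge eqxx.
    by rewrite /ge /gr eqxx orbT.
  case/orP => H; first exact: (connect_sub sub).
  apply: connect_trans (connect_sub sub H) _; apply: connect1.
  by rewrite /ge cK eqxx.
Qed.

Lemma sumA x : \sum_v (connect ge x v && s v && ~~ s (c v) : nat) =
  \sum_v (fconnect gr x v * (s v != s (c v))).
Proof.
rewrite (eq_bigr (fun v => (fconnect gr x v && s v && ~~ s (c v) : nat) +
   (fconnect gr x (c v) && s v && ~~ s (c v) : nat))); last first.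
  move=> v _; rewrite connE.
  have := @Odisj x v.
  by case: (fconnect gr x v); case: (fconnect gr x (c v)); rewrite /= ?addn0 //; move/(_ isT).
rewrite big_split /= [X in _ + X = _](reindex_inj (inv_inj cK)) /= -big_split /=.
apply: eq_bigr => v _; rewrite cK.
by case: (fconnect gr x v); case: (s v); case: (s (c v)).
Qed.

Lemma sumB x : \sum_v (connect ge x v && s v && ~~ s (c' v) : nat) =
  \sum_v (fconnect gr x v * (s (c v) != s (gr v))).
Proof.
rewrite (eq_bigr (fun v => (fconnect gr x v && s v && ~~ s (c' v) : nat) +
   (fconnect gr x (c v) && s v && ~~ s (c' v) : nat))); last first.
  move=> v _; rewrite connE.
  have := @Odisj x v.
  by case: (fconnect gr x v); case: (fconnect gr x (c v)); rewrite /= ?addn0 //; move/(_ isT).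
rewrite big_split /= [X in _ + X = _](reindex_inj (inv_inj cK)) /=.
rewrite [X in X + _ = _](reindex_inj gr_inj) /= -big_split /=.
apply: eq_bigr => v _; rewrite cK -(same_fconnect1_r gr_inj).
have -> : c' (gr v) = c v by rewrite /gr c'K.
by case: (fconnect gr x v); case: (s (gr v)); case: (s (c v)).
Qed.

Lemma sum_traject (F : T -> nat) n y :
  \sum_(v <- traject gr y n) F v = \sum_(k < n) F (iter k gr y).
Proof.
elim: n y => [|n IH] y; first by rewrite big_nil big_ord0.
rewrite trajectS big_cons big_ord_recl IH /=; congr (_ + _).
by apply: eq_bigr => k _; rewrite /bump /= -iterSr.
Qed.

Lemma sum_orbit (F : T -> nat) x :
  \sum_v (fconnect gr x v * F v) = \sum_(k < order gr x) F (iter k gr x).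
Proof.
rewrite -sum_traject -/(orbit gr x) [RHS]big_uniq ?orbit_uniq // [RHS]big_mkcond /=.
by apply: eq_bigr => v _; rewrite -fconnect_orbit; case: (fconnect gr x v); rewrite ?mul1n.
Qed.

Definition dd y := ((s y != s (c y)) : nat) + (s (c y) != s (gr y)).

Lemma dd_sg y : dd (sg y) = dd y.
Proof. by rewrite /dd gr_sg csg !ss; case: (s y); case: (s (c y)); case: (s (gr y)). Qed.

Lemma par x t : odd (\sum_(k < t) dd (iter k gr x)) = (s x != s (iter t gr x)).
Proof.
elim: t => [|t IH]; first by rewrite big_ord0 /= eqxx.
rewrite big_ord_recr /= oddD IH /dd.
by case: (s x); case: (s (iter t gr x)); case: (s (c (iter t gr x))); case: (s (gr (iter t gr x))).
Qed.

Lemma main x : connect ge x (sg x) ->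
  (\sum_v (connect ge x v && s v && ~~ s (c v) : nat) +
   \sum_v (connect ge x v && s v && ~~ s (c' v) : nat)) %% 4 = 2.
Proof.
move=> Hx.
rewrite sumA sumB -big_split /=.
rewrite (eq_bigr (fun v => fconnect gr x v * dd v)); last by move=> v _; rewrite mulnDr.
rewrite sum_orbit.
move: Hx; rewrite connE => /orP[] Hx; last first.
  have hp : forall y, gr (sg (c (gr y))) = sg (c y).
    by move=> y; rewrite gr_sg /gr !cK c'K.
  have Hx' : fconnect gr x (sg (c x)) by rewrite -csg.
  have [z [Hz|Hz]] := @refl_lemma (fun y => sg (c y)) hp x Hx'.
  - by move: (sgcN z); rewrite Hz eqxx.
  - move: (sgc'N (c z)); rewrite /gr in Hz; by rewrite -Hz sgK eqxx.
have [t [Ht tp]] : exists t, iter t gr x = sg x /\ t < order gr x.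
  by exists (findex gr x (sg x)); rewrite iter_findex // findex_max.
have t0 : t != 0.
  apply/eqP => t0; move: Ht; rewrite t0 /= => E.
  by move: (ss x); rewrite -E; case: (s x).
have H2 : iter (t + t) gr x = x by rewrite iterD Ht iter_sg Ht sgK.
have ep : order gr x = t + t.
  case: (ltngtP (t + t) (order gr x)) => // h.
    by move: (findex_iter h); rewrite H2 findex0; lia.
  have hu : t + t - order gr x < order gr x by lia.
  move: (findex_iter hu).
  have -> : iter (t + t - order gr x) gr x = x.
    have E : iter (t + t) gr x = iter (t + t - order gr x) gr (iter (order gr x) gr x).
      by rewrite -iterD subnK // ltnW.
    by rewrite (iter_order gr_inj) H2 in E.
  rewrite findex0; lia.
rewrite ep big_split_ord /=.
rewrite [X in _ + X](eq_bigr (fun k : 'I_t => dd (iter k gr x))); last first.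
  by move=> k _; rewrite addnC iterD Ht iter_sg dd_sg.
have := par x t; rewrite Ht ss; case: (s x) => /= HS;
  have : (\sum_(k < t) dd (iter k gr x)) %% 2 = 1 by rewrite modn2 HS.
all: lia.
Qed.
End Gen.

Section Conc.
Variables (n : nat) (alpha : nat -> bool) (m : 'I_(4 * n) -> 'I_(4 * n)).
Hypothesis hm : is_cup_matching alpha m.
Let LL := fun k : 'I_(4 * n) => lab n alpha k.
Let hm' : ism LL m := hm.
Local Notation rv := (@rev_ord (4 * n)).

Lemma LLrev k : LL (rv k) = ~~ LL k.
Proof. exact: lab_rev. Qed.

Lemma msym x : m (rv x) = rv (m x).
Proof.
have [inv dif lt nc] := hm'.
pose m2 := fun x => rv (m (rv x)).
have h2 : ism LL m2.
  split.
  - by move=> y; rewrite /m2 rev_ordK inv rev_ordK.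
  - move=> y; rewrite /m2 LLrev -{1}(rev_ordK y) LLrev.
    by move: (dif (rv y)); case: (LL (rv y)); case: (LL (m (rv y))).
  - move=> y Ly; have : ~~ LL (rv y) by rewrite LLrev Ly.
    move/(lt_notL hm') => h; rewrite /m2 /=.
    move: h; rewrite /=; have := ltn_ord y; have := ltn_ord (m (rv y)); lia.
  - move=> a b ha hb; apply/negP => /and3P [h1 h2 h3].
    move: ha hb h1 h2 h3; rewrite /m2 /= => ha hb h1 h2 h3.
    apply: (nc' hm' (a := m (rv b)) (b := m (rv a))); rewrite ?inv /=;
    move: ha hb h1 h2 h3;
    have := ltn_ord a; have := ltn_ord b; have := ltn_ord (m (rv a)); have := ltn_ord (m (rv b)); lia.
have := uniq_m hm' h2 (rv x); rewrite /m2 rev_ordK => ->; by [].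
Qed.

Lemma sumP (P : pred 'I_(4 * n)) : count P (enum 'I_(4 * n)) = \sum_(v : 'I_(4 * n)) (P v : nat).
Proof.
rewrite -sum1_count big_enum_cond big_mkcond /=; apply: eq_bigr => v _; by case: (P v).
Qed.

Lemma memys b : (b \in crossR m) = (2 * n <= b) && (m b < 2 * n).
Proof. by rewrite mem_filter mem_enum andbT. Qed.

Lemma ys_uniq : uniq (crossR m).
Proof. exact: filter_uniq (enum_uniq _). Qed.

Lemma minv x : m (m x) = x.
Proof. by case: hm'. Qed.

Lemma cross_rev b : b \in crossR m -> m b = rv b.
Proof.
rewrite memys => /andP [h1 h2]; apply: val_inj => /=.
have hb := ltn_ord b; have hmb := ltn_ord (m b).
case: (ltngtP (m b) (4 * n - b.+1)) => h //; exfalso.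
- apply: (nc' hm' (a := m b) (b := rv b)); rewrite ?minv ?msym /=; lia.
- apply: (nc' hm' (a := rv b) (b := m b)); rewrite ?minv ?msym /=; lia.
Qed.

Lemma even_inv (f : 'I_(4 * n) -> 'I_(4 * n)) (P : pred 'I_(4 * n)) :
  involutive f -> (forall v, f v != v) -> (forall v, P (f v) = P v) ->
  ~~ odd (\sum_v (P v : nat)).
Proof.
move=> fK fN fP.
rewrite (eq_bigr (fun v => (P v && (v < f v) : nat) + (P v && (f v < v)))); last first.
  move=> v _; have := fN v; case: (P v) => //=.
  case: (ltngtP v (f v)) => // h; move/eqP; case; apply: val_inj; by [].
rewrite big_split /= [X in _ + X](reindex_inj (inv_inj fK)) /=.
have -> : \sum_(v : 'I_(4 * n)) (P (f v) && (f (f v) < f v) : nat) = \sum_(v : 'I_(4 * n)) (P v && (v < f v) : nat).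
  by apply: eq_bigr => v _; rewrite fP fK.
by rewrite addnn odd_double.
Qed.

Lemma ys_even : ~~ odd (size (crossR m)).
Proof.
rewrite size_filter sumP.
have e1 : \sum_(v : 'I_(4 * n)) ((2 * n <= v) && (m v < 2 * n) : nat) =
          \sum_(v : 'I_(4 * n)) ((v < 2 * n) && (2 * n <= m v) : nat).
  rewrite (reindex_inj (inv_inj minv)) /=; apply: eq_bigr => v _; rewrite minv.
  by rewrite andbC.
have e2 : \sum_(v : 'I_(4 * n)) ((v < 2 * n) : nat) =
   \sum_(v : 'I_(4 * n)) ((v < 2 * n) && (m v < 2 * n) : nat) +
   \sum_(v : 'I_(4 * n)) ((v < 2 * n) && (2 * n <= m v) : nat).
  rewrite -big_split /=; apply: eq_bigr => v _.
  by case: (v < 2 * n); case: (ltnP (m v) (2 * n)).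
have e3 : \sum_(v : 'I_(4 * n)) ((v < 2 * n) : nat) = 2 * n.
  have e4 : \sum_(v : 'I_(4 * n)) ((v < 2 * n) : nat) =
            \sum_(v : 'I_(4 * n)) ((2 * n <= v) : nat).
    rewrite (reindex_inj (@rev_ord_inj _)) /=; apply: eq_bigr => v _.
    have := ltn_ord v; case: (ltnP (4 * n - v.+1) (2 * n)); case: (leqP (2 * n) v); lia.
  have e5 : \sum_(v : 'I_(4 * n)) ((v < 2 * n) : nat) +
            \sum_(v : 'I_(4 * n)) ((2 * n <= v) : nat) = 4 * n.
    rewrite -big_split /=.
    transitivity (\sum_(v : 'I_(4 * n)) 1); last by rewrite sum1_card card_ord.
    by apply: eq_bigr => v _; case: (ltnP v (2 * n)).
  lia.
have ev := @even_inv m (fun v => (v < 2 * n) && (m v < 2 * n)) minv _ _.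
have H : ~~ odd (\sum_(v : 'I_(4 * n)) ((v < 2 * n) && (m v < 2 * n) : nat)).
  apply: ev.
  - move=> v; have [_ dif _ _] := hm'; apply/eqP => E; move: (dif v); rewrite E eqxx //.
  - by move=> v; rewrite minv andbC.
rewrite e1; rewrite e3 in e2.
have o := congr1 odd e2; rewrite oddD oddM /= in o.
move: H o; by case: (odd _); case: (odd _).
Qed.

Local Notation ys := (crossR m).
Definition pidx i := if odd i then i.-1 else i.+1.

Lemma pidx_lt i : i < size ys -> pidx i < size ys.
Proof.
rewrite /pidx => hi; case oi: (odd i); first lia.
rewrite ltn_neqAle hi andbT; apply/eqP => E.
by move: ys_even; rewrite -E /= oi.
Qed.

Lemma pidxK i : 0 < i \/ ~~ odd i -> pidx (pidx i) = i.
Proof.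
rewrite /pidx; case oi: (odd i) => h.
- have i0 : 0 < i by case: h => //; rewrite oi.
  have : odd i.-1 = false.
    have Ei : i = i.-1.+1 by lia.
    by move: oi; rewrite Ei /=; case: (odd i.-1).
  move=> ->; lia.
- by rewrite /= oi.
Qed.

Lemma lp_nth x0 i : i < size ys -> lpartner m (nth x0 ys i) = nth x0 ys (pidx i).
Proof.
move=> hi; rewrite /lpartner mem_nth // index_uniq //; last exact: ys_uniq.
rewrite -/(pidx i) pidx_lt //; exact: set_nth_default (pidx_lt hi).
Qed.

Lemma lp_facts x : x \in ys ->
  [/\ lpartner m x \in ys, lpartner m (lpartner m x) = x & lpartner m x != x].
Proof.
move=> hx; set i := index x ys.
have hi : i < size ys by rewrite index_mem.
have ex : x = nth x ys i by rewrite nth_index.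
have hp := pidx_lt hi.
rewrite ex lp_nth //; split.
- exact: mem_nth.
- rewrite lp_nth // pidxK //; case oi: (odd i); [left|by right].
  by rewrite lt0n; apply/negP => /eqP E; rewrite E in oi.
- rewrite nth_uniq //; last exact: ys_uniq.
  rewrite /pidx; case oi: (odd i); apply/eqP; last lia.
  have : i != 0 by apply/negP => /eqP E; rewrite E in oi.
  lia.
Qed.

Lemma ys_ge (x : 'I_(4 * n)) : x \in ys -> 2 * n <= x.
Proof. by rewrite memys => /andP []. Qed.

Local Notation c := (cupC m).

Lemma c_in x : x \in ys -> c x = rv (lpartner m x).
Proof.
move=> hx; rewrite /cupC hx; have [h1 _ _] := lp_facts hx; exact: cross_rev.
Qed.

Lemma c_mid x : x \notin ys -> m x \in ys -> c x = lpartner m (m x).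
Proof. by move=> h1 h2; rewrite /cupC (negbTE h1) h2. Qed.

Lemma c_out x : x \notin ys -> m x \notin ys -> c x = m x.
Proof. by move=> h1 h2; rewrite /cupC (negbTE h1) (negbTE h2). Qed.

Lemma mx_rev x : m x \in ys -> m x = rv x.
Proof. move=> h; have := cross_rev h; rewrite minv => E; by rewrite {2}E rev_ordK. Qed.

Lemma rv_lt (x : 'I_(4 * n)) : (rv x < 2 * n) = (2 * n <= x).
Proof. rewrite /=; have := ltn_ord x; case: (leqP (2 * n) x); lia. Qed.

Lemma notys_lt (x : 'I_(4 * n)) : x < 2 * n -> x \notin ys.
Proof. by move=> h; rewrite memys; apply/negP => /andP []; lia. Qed.

Lemma cK : involutive c.
Proof.
move=> x; case hx: (x \in ys).
- have [h1 h2 h3] := lp_facts hx.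
  have nu : rv (lpartner m x) \notin ys by apply: notys_lt; rewrite rv_lt; exact: ys_ge.
  have mu : m (rv (lpartner m x)) = lpartner m x by rewrite msym cross_rev // rev_ordK.
  by rewrite (c_in hx) (c_mid nu) mu.
case hmx: (m x \in ys).
- have [h1 h2 h3] := lp_facts hmx.
  have nx : x \notin ys by rewrite hx.
  by rewrite (c_mid nx hmx) (c_in h1) h2 (mx_rev hmx) rev_ordK.
- have nx : x \notin ys by rewrite hx.
  have nmx : m x \notin ys by rewrite hmx.
  have nmx' : m (m x) \notin ys by rewrite minv.
  by rewrite (c_out nx nmx) (c_out nmx nmx') minv.
Qed.

Lemma cN (x : 'I_(4 * n)) : c x != x.
Proof.
case hx: (x \in ys).
- rewrite c_in //; have [h1 _ _] := lp_facts hx.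
  apply/eqP => E; have h := rv_lt (lpartner m x); rewrite E (ys_ge h1) in h; have := ys_ge hx; lia.
case hmx: (m x \in ys).
- rewrite c_mid ?hx //; have [h1 _ _] := lp_facts hmx.
  by apply/eqP => E; move: h1; rewrite E hx.
- rewrite c_out ?hx ?hmx //; have [_ dif _ _] := hm'.
  by apply/eqP => E; move: (dif x); rewrite E eqxx.
Qed.

Lemma c_rev (x : 'I_(4 * n)) : c (rv x) = rv (c x).
Proof.
case hx: (x \in ys).
- have nr : rv x \notin ys by apply: notys_lt; rewrite rv_lt; exact: ys_ge.
  have mr : m (rv x) = x by rewrite msym cross_rev // rev_ordK.
  have hmr : m (rv x) \in ys by rewrite mr.
  by rewrite (c_mid nr hmr) mr (c_in hx) rev_ordK.
have nx : x \notin ys by rewrite hx.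
case hmx: (m x \in ys).
- have rx : rv x = m x by rewrite mx_rev.
  by rewrite rx (c_in hmx) (c_mid nx hmx).
- have nmx : m x \notin ys by rewrite hmx.
  have n1 : rv x \notin ys.
    apply/negP => h; have E := cross_rev h; rewrite rev_ordK msym in E.
    have E2 : m x = rv x by apply: rev_ord_inj; rewrite rev_ordK E.
    by move: hmx; rewrite E2 h.
  have n2 : m (rv x) \notin ys.
    apply/negP => h; have E := mx_rev h; rewrite rev_ordK in E.
    by move: h; rewrite E hx.
  by rewrite (c_out n1 n2) (c_out nx nmx) msym.
Qed.

Lemma sgcN (x : 'I_(4 * n)) : rv (c x) != x.
Proof.
case hx: (x \in ys).
- have [_ _ h3] := lp_facts hx; by rewrite (c_in hx) rev_ordK.
have nx : x \notin ys by rewrite hx.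
case hmx: (m x \in ys).
- have [_ _ h3] := lp_facts hmx.
  rewrite (c_mid nx hmx); apply/eqP => E.
  have E2 : lpartner m (m x) = m x by apply: rev_ord_inj; rewrite E (mx_rev hmx) rev_ordK.
  by rewrite E2 eqxx in h3.
- have nmx : m x \notin ys by rewrite hmx.
  rewrite (c_out nx nmx); apply/eqP => E.
  have E2 : m x = rv x by apply: rev_ord_inj; rewrite E rev_ordK.
  case: (leqP (2 * n) x) => h.
  + have : x \in ys by rewrite memys h E2 rv_lt h.
    by rewrite hx.
  + have : m x \in ys by rewrite memys minv h andbT E2 leqNgt rv_lt -ltnNge h.
    by rewrite hmx.
Qed.

Lemma cross_char (x : 'I_(4 * n)) : (x \in ys) = (2 * n <= x) && ~~ (2 * n <= c x).
Proof.
case hx: (x \in ys).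
- have [h1 _ _] := lp_facts hx.
  by rewrite (c_in hx) (ys_ge hx) -ltnNge rv_lt (ys_ge h1).
have nx : x \notin ys by rewrite hx.
case hmx: (m x \in ys).
- have [h1 _ _] := lp_facts hmx.
  by rewrite (c_mid nx hmx) (ys_ge h1) andbF.
- have nmx : m x \notin ys by rewrite hmx.
  by rewrite (c_out nx nmx) -ltnNge -memys hx.
Qed.

Lemma link (x0 : 'I_(4 * n)) (C : {set 'I_(4 * n)})
  (Cc : forall y, y \in C -> c y \in C) (Cr : forall y, y \in C -> rv y \in C) :
  \sum_(v : 'I_(4 * n)) ((v \in C) && (2 * n <= v) && ~~ (2 * n <= c v) : nat) =
  2 * count (meets m C) (iota 0 (nlinked m)).
Proof.
set K := nlinked m.
have hK : size ys = K.*2 by rewrite /K /nlinked even_halfK // ys_even.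
have e1 : \sum_(v : 'I_(4 * n)) ((v \in C) && (2 * n <= v) && ~~ (2 * n <= c v) : nat) =
          count (mem C) ys.
  rewrite /crossR count_filter -sumP; apply: eq_count => v /=.
  by rewrite -andbA -cross_char memys.
rewrite e1 -sum1_count big_mkcond (big_nth x0) hK.
have pairsum : forall (f : nat -> nat) k,
    \sum_(0 <= i < k.*2) f i = \sum_(0 <= j < k) (f j.*2 + f j.*2.+1).
  move=> f; elim=> [|k IH]; first by rewrite !big_geq.
  by rewrite doubleS !big_nat_recr //= IH addnA.
rewrite pairsum -sum1_count big_mkcond /= big_distrr /=.
rewrite [X in _ = X](_ : _ = \sum_(0 <= j < K) 2 * (if meets m C j then 1 else 0)); last first.
  rewrite big_mkcond /index_iota subn0; apply: eq_bigr => i _; by case: (meets m C i).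
rewrite big_nat_cond [RHS]big_nat_cond; apply: eq_bigr => j /andP [/andP [_ hj] _].
have hj1 : j.*2 < size ys by rewrite hK ltn_double.
have hj2 : j.*2.+1 < size ys by rewrite hK -doubleS leq_double.
set y1 := nth x0 ys j.*2; set y2 := nth x0 ys j.*2.+1.
have p1 : lpartner m y1 = y2 by rewrite /y1 lp_nth // /pidx odd_double.
have p2 : lpartner m y2 = y1.
  have pp : pidx j.*2.+1 = j.*2 by rewrite /pidx /= odd_double.
  by rewrite /y2 (lp_nth _ hj2) pp.
have y1in : y1 \in ys by exact: mem_nth.
have y2in : y2 \in ys by exact: mem_nth.
have eq12 : (y1 \in C) = (y2 \in C).
  apply/idP/idP => h.
  - by have := Cr _ (Cc _ h); rewrite (c_in y1in) p1 rev_ordK.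
  - by have := Cr _ (Cc _ h); rewrite (c_in y2in) p2 rev_ordK.
have em : meets m C j = (y1 \in C).
  rewrite /meets /lp1 /lp2 (nth_map x0) // (nth_map x0) // -/y1 -/y2.
  apply/existsP/idP.
  - case=> y /andP [yC /orP [] /eqP E].
    + by have <- : y = y1 by apply: val_inj.
    + by rewrite eq12; have <- : y = y2 by apply: val_inj.
  - by move=> h; exists y1; rewrite h eqxx.
rewrite em -eq12; by case: (y1 \in C).
Qed.

Lemma pair_c (x0 : 'I_(4 * n)) j : j < nlinked m ->
  [/\ c (nth x0 ys j.*2) = rv (nth x0 ys j.*2.+1),
      lp1 m j = nth x0 ys j.*2 & lp2 m j = nth x0 ys j.*2.+1].
Proof.
move=> hj.
have hK : size ys = (nlinked m).*2 by rewrite /nlinked even_halfK // ys_even.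
have hj1 : j.*2 < size ys by rewrite hK ltn_double.
have hj2 : j.*2.+1 < size ys by rewrite hK -doubleS leq_double.
split.
- have y1in : nth x0 ys j.*2 \in ys by exact: mem_nth.
  by rewrite (c_in y1in) (lp_nth _ hj1) /pidx odd_double.
- by rewrite /lp1 (nth_map x0).
- by rewrite /lp2 (nth_map x0).
Qed.
End Conc.

Theorem corollary3p8 (n : nat) (hn : 4 <= n) (w w' : seq 'I_n)
  (hw : min_coset_rep w) (hw' : min_coset_rep w')
  (m m' : 'I_(4 * n) -> 'I_(4 * n))
  (hm : is_cup_matching (alpha_of w) m)
  (hm' : is_cup_matching (alpha_of w') m')
  (x : 'I_(4 * n)) :
  self_intersects m m' x -> circle_color m m' x = Red.
Proof.
move=> SI.
set E := cedge m m'.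
have Esym : forall a b, E a b = E b a.
  move=> a b; rewrite /E /cedge.
  have h1 : (cupC m a == b) = (cupC m b == a).
    by apply/eqP/eqP => <-; rewrite (cK hm).
  have h2 : (cupC m' a == b) = (cupC m' b == a).
    by apply/eqP/eqP => <-; rewrite (cK hm').
  by rewrite h1 h2.
have csym : forall a b, connect E a b -> connect E b a.
  by move=> a b; rewrite (sym_connect_sym Esym).
have conn_rev : forall a b, connect E a b -> connect E (rev_ord a) (rev_ord b).
  move=> a b H.
  have Cl : closed E [pred z | connect E (rev_ord a) (rev_ord z)].
    have Er : forall z u, E z u -> E (rev_ord z) (rev_ord u).
      move=> z u /orP [] /eqP <-; rewrite /E /cedge.
      - by rewrite (c_rev hm) eqxx.
      - by rewrite (c_rev hm') eqxx orbT.
    move=> z u Ezu; rewrite !inE; apply/idP/idP => h.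
    - exact: connect_trans h (connect1 (Er _ _ Ezu)).
    - by apply: connect_trans h (connect1 _); rewrite Esym; exact: Er.
  by have := closed_connect Cl H; rewrite !inE connect0 => <-.
set C := circle m m' x.
have inC : forall y, (y \in C) = connect E x y by move=> y; rewrite inE.
have Cc : forall y, y \in C -> cupC m y \in C.
  move=> y; rewrite !inC => h; apply: connect_trans h (connect1 _); by rewrite /E /cedge eqxx.
have Cc' : forall y, y \in C -> cupC m' y \in C.
  move=> y; rewrite !inC => h; apply: connect_trans h (connect1 _); by rewrite /E /cedge eqxx orbT.
have Hx : connect E x (rev_ord x).
  have key : forall y, y \in C -> rev_ord y \in C -> connect E x (rev_ord x).
    move=> y; rewrite !inC => h1 h2.
    apply: connect_trans h2 _; apply: csym; apply: conn_rev h1.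
  case: SI => [[j hj hb] | [j hj hb]]; move: hb; rewrite /contains_both => /andP [/existsP [y1 /andP [y1C /eqP e1]] /existsP [y2 /andP [y2C /eqP e2]]].
  - have [pc l1 l2] := pair_c hm x hj.
    have Ey1 : y1 = nth x (crossR m) j.*2 by apply: val_inj; rewrite e1 l1.
    have Ey2 : y2 = nth x (crossR m) j.*2.+1 by apply: val_inj; rewrite e2 l2.
    apply: (key y2) => //; rewrite Ey2 -pc -Ey1; exact: Cc.
  - have [pc l1 l2] := pair_c hm' x hj.
    have Ey1 : y1 = nth x (crossR m') j.*2 by apply: val_inj; rewrite e1 l1.
    have Ey2 : y2 = nth x (crossR m') j.*2.+1 by apply: val_inj; rewrite e2 l2.
    apply: (key y2) => //; rewrite Ey2 -pc -Ey1; exact: Cc'.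
have Cr : forall y, y \in C -> rev_ord y \in C.
  move=> y; rewrite !inC => h.
  apply: connect_trans Hx _; exact: conn_rev.
have ss : forall v : 'I_(4 * n), (2 * n <= rev_ord v) = ~~ (2 * n <= v).
  by move=> v; rewrite leqNgt rv_lt.
have Hm := @main _ (cupC m) (cupC m') (@rev_ord _) (fun v => 2 * n <= v)
  (cK hm) (cK hm') (@rev_ordK _) (cN hm) (cN hm') (c_rev hm) (c_rev hm') ss
  (sgcN hm) (sgcN hm') x Hx.
have L1 := link hm x Cc Cr.
have L2 := link hm' x Cc' Cr.
have e1 : \sum_(v : 'I_(4 * n)) (connect (ge (cupC m) (cupC m')) x v && (2 * n <= v) && ~~ (2 * n <= cupC m v) : nat) =
   2 * count (meets m C) (iota 0 (nlinked m)).
  by rewrite -L1; apply: eq_bigr => v _; rewrite inC.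
have e2 : \sum_(v : 'I_(4 * n)) (connect (ge (cupC m) (cupC m')) x v && (2 * n <= v) && ~~ (2 * n <= cupC m' v) : nat) =
   2 * count (meets m' C) (iota 0 (nlinked m')).
  by rewrite -L2; apply: eq_bigr => v _; rewrite inC.
rewrite e1 e2 in Hm.
have ok : odd (nmet m m' C).
  rewrite /nmet; move: Hm; set a := count _ _; set b := count _ _ => Hm.
  have : (a + b) %% 2 = 1 by lia.
  by rewrite modn2; case: (odd (a + b)).
rewrite /circle_color -/C ok andbF /=.
by rewrite !orbT.
Qed.
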